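(* Let $d\ge1$, $m\in\mathbb{N}$ ($m\ge1$), and let $A_0,A_1\in\mathbb{R}^{d\times d}$ be constant matrices. Let $G:\mathbb{Z}_0^\infty\to\mathbb{R}^{d\times d}$ satisfy $A_1G(u)=G(u)A_1$ for all $u\in\mathbb{Z}_0^\infty$, and let $Z$ be the discrete function defined in the context. Then \[ X(u)=\sum_{r=1}^{u}Z(u-m-r)\,G(r-1),\qquad u\in\mathbb{Z}_{-m}^{\infty} \] (an empty sum being $\Theta$), is a solution of \[ \Delta X(u)=A_0X(u-m)+X(u-m)A_1+G(u),\ \ u\in\mathbb{Z}_0^{\infty},\qquad X(u)=\Theta,\ \ u\in\mathbb{Z}_{-m}^{0}. \]
   Context: $\Theta$ and $I$ denote the $d\times d$ zero and identity matrices; $\mathbb{Z}_a^b=\{a,a+1,\dots,b\}$ (with $\mathbb{Z}_a^\infty=\{a,a+1,\dots\}$ and $\mathbb{Z}_{-\infty}^b=\{\dots,b-1,b\}$); $\Delta X(u)=X(u+1)-X(u)$. For integers $a$ and $r\ge0$, $\binom{a}{r}=a(a-1)\cdots(a-r+1)/r!$. Define matrices $Q_{r+1}(rm)$, $r=0,1,2,\dots$, by $Q_1(0)=I$ and $Q_{r+1}(rm)=A_0Q_r((r-1)m)+Q_r((r-1)m)A_1$ for $r\ge1$. Define $Z(u)=\Theta$ for $u\in\mathbb{Z}_{-\infty}^{-m-1}$, $Z(u)=I$ for $u\in\mathbb{Z}_{-m}^{0}$, and for each integer $n\ge1$ and $u\in\mathbb{Z}_{(n-1)(m+1)+1}^{n(m+1)}$,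 \[ Z(u)=\sum_{r=0}^{n}\binom{u-(r-1)m}{r}Q_{r+1}(rm). \] *)

(* Defs.v *)
From HB Require Import structures.
From mathcomp Require Import all_boot all_order all_algebra.
From mathcomp Require Import reals.
Set Implicit Arguments. Unset Strict Implicit. Unset Printing Implicit Defensive.
Import Order.TTheory GRing.Theory Num.Theory.
Local Open Scope ring_scope.

Section Defs.
Variables (R : realType) (d : nat).

Definition binz (a : int) (r : nat) : R :=
  (\prod_(i < r) (a - (i : nat)%:Z)%:~R) / (r`!)%:R.

(* Qmat A0 A1 r = Q_{r+1}(r m) :  Q_1(0) = I,
   Q_{r+1}(rm) = A0 Q_r((r-1)m) + Q_r((r-1)m) A1. *)
Fixpoint Qmat (A0 A1 : 'M[R]_d) (r : nat) : 'M[R]_d :=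
  match r with
  | 0 => 1%:M
  | r'.+1 => A0 *m Qmat A0 A1 r' + Qmat A0 A1 r' *m A1
  end.

(* The block index n >= 1 with u in Z_{(n-1)(m+1)+1}^{n(m+1)}, for u >= 1 *)
Definition blockn (m : nat) (u : int) : nat := ((`|u|%N).-1 %/ m.+1).+1.

Definition Zfun (m : nat) (A0 A1 : 'M[R]_d) (u : int) : 'M[R]_d :=
  if u < - (m%:Z) then 0
  else if u <= 0 then 1%:M
  else \sum_(r < (blockn m u).+1)
         binz (u - ((r : nat)%:Z - 1) * m%:Z) r *: Qmat A0 A1 r.

Definition Xsol (m : nat) (A0 A1 : 'M[R]_d) (G : nat -> 'M[R]_d) (u : int)
  : 'M[R]_d :=
  if 0 < u then
    \sum_(1 <= r < (`|u|%N).+1) Zfun m A0 A1 (u - m%:Z - r%:Z) *m G r.-1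
  else 0.

End Defs.

(* Main.v *)
Require Import Defs.
From HB Require Import structures.
From mathcomp Require Import all_boot all_order all_algebra.
From mathcomp Require Import reals.
From mathcomp Require Import zify ring lra.
Set Implicit Arguments. Unset Strict Implicit. Unset Printing Implicit Defensive.
Import Order.TTheory GRing.Theory Num.Theory.
Local Open Scope ring_scope.

Lemma big_trunc (V : zmodType) (F : nat -> V) n N : (n <= N)%N ->
  (forall r, (n <= r)%N -> (r < N)%N -> F r = 0) ->
  \sum_(r < N) F r = \sum_(r < n) F r.
Proof.
move=> le H; rewrite -(subnKC le) big_split_ord /= [X in _ + X]big1 ?addr0 //.
move=> i _; apply: H; rewrite /= ?leq_addr //.
by have := ltn_ord i; lia.
Qed.

Definition Yb (R : realType) d m (A0 A1 : 'M[R]_d) N k :=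
  \sum_(r < N) (binomial (k - r * m)%N r)%:R *: Qmat A0 A1 r.

Lemma Yb_ext (R : realType) d m (A0 A1 : 'M[R]_d) N k : (k < N)%N ->
  Yb m A0 A1 N k = Yb m A0 A1 k.+1 k.
Proof.
move=> lt; rewrite /Yb (@big_trunc _ (fun r : nat => (binomial (k - r * m)%N r)%:R *: Qmat A0 A1 r) k.+1 N) // => r h1 h2.
by rewrite bin_small ?scale0r //; lia.
Qed.

Lemma Yb_small (R : realType) d m (A0 A1 : 'M[R]_d) k : (0 < m)%N -> (k <= m)%N ->
  Yb m A0 A1 k.+1 k = 1%:M.
Proof.
move=> hm le; rewrite /Yb big_ord_recl /= mul0n subn0 bin0 scale1r big1 ?addr0 //.
move=> i _; rewrite bin_small ?scale0r //=; rewrite /bump /=. 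
have : (m <= (1 + i) * m)%N by rewrite leq_pmull.
lia.
Qed.

Lemma binP m k r : (m <= k)%N ->
  'C(k.+1 - r.+1 * m, r.+1) = ('C(k - r.+1 * m, r.+1) + 'C(k - m - r * m, r))%N.
Proof.
move=> le; rewrite !mulSn !subnDA.
case: (leqP (r * m) (k-m)) => h.
  have -> : (k.+1 - m - r * m = (k - m - r * m).+1)%N by lia.
  by rewrite binS.
have -> : (k.+1 - m - r * m = 0)%N by lia.
have -> : (k - m - r * m = 0)%N by lia.
rewrite bin0n; case: r h => //= r h; lia.
Qed.

Definition Lop (R : realType) d (A0 A1 : 'M[R]_d) (M : 'M[R]_d) := A0 *m M + M *m A1.

Lemma Yb_rec (R : realType) d m (A0 A1 : 'M[R]_d) k : (m <= k)%N ->
  Yb m A0 A1 k.+2 k.+1 - Yb m A0 A1 k.+1 k = Lop A0 A1 (Yb m A0 A1 (k - m).+1 (k - m)).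
Proof.
move=> le; rewrite -(@Yb_ext _ _ _ _ _ k.+2 k) // -(@Yb_ext _ _ _ _ _ k.+1 (k-m)); last lia.
rewrite /Yb /Lop big_ord_recl [X in _ - X]big_ord_recl /= !mul0n !subn0 !bin0.
rewrite opprD addrACA subrr add0r -sumrB mulmx_sumr mulmx_suml -big_split /=.
apply: eq_bigr => i _; rewrite /bump /= add1n binP // natrD scalerDl add0n addrAC subrr add0r.
by rewrite -scalemxAr -scalemxAl -scalerDr.
Qed.

Lemma big_splitn (V : zmodType) (F : nat -> V) n u : (n <= u)%N ->
  \sum_(j < u) F j = \sum_(j < n) F j + \sum_(j < u - n) F (n + j)%N.
Proof.
move=> le; have E := subnKC le; move: (u - n)%N E => k <-; by rewrite big_split_ord.
Qed.

Lemma binz_nat (R : realType) (a r : nat) : binz R a r = ('C(a, r))%:R.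
Proof.
have P : \prod_(i < r) ((a%:Z - (i : nat)%:Z)%:~R : R) = (a ^_ r)%:R.
  elim: r => [|r IH]; first by rewrite big_ord0 ffactn0.
  rewrite big_ord_recr /= IH ffactnSr natrM.
  case: (leqP r a) => h.
    by rewrite subzn.
  by rewrite ffact_small // !mul0r.
by rewrite /binz P -bin_ffact natrM mulfK // pnatr_eq0 -lt0n fact_gt0.
Qed.

Definition Y (R : realType) d m (A0 A1 : 'M[R]_d) k := Yb m A0 A1 k.+1 k.

Lemma Y_rec (R : realType) d m (A0 A1 : 'M[R]_d) k : (0 < m)%N ->
  Y m A0 A1 k.+1 - Y m A0 A1 k =
  if (m <= k)%N then Lop A0 A1 (Y m A0 A1 (k - m)) else 0.
Proof.
move=> hm; rewrite /Y; case: ifP => h; first exact: Yb_rec.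
by rewrite !Yb_small ?subrr //; lia.
Qed.

Lemma Zfun_Y (R : realType) d m (A0 A1 : 'M[R]_d) k : (0 < m)%N ->
  Zfun m A0 A1 (k%:Z - m%:Z) = Y m A0 A1 k.
Proof.
move=> hm; rewrite /Zfun /Y.
have -> : (k%:Z - m%:Z < - m%:Z) = false by lia.
case: (leqP k m) => hk.
  have -> : (k%:Z - m%:Z <= 0) = true by lia.
  by rewrite Yb_small.
have -> : (k%:Z - m%:Z <= 0) = false by lia.
rewrite subzn ?(ltnW hk) // /blockn absz_nat.
set v := (k - m)%N.
set q := (v.-1 %/ m.+1)%N.
have hq := divn_eq v.-1 m.+1.
have hr := ltn_pmod v.-1 (ltn0Sn m).
rewrite -/q mulnS in hq.
rewrite /Yb (@big_trunc _ (fun r : nat => (binomial (k - r * m)%N r)%:R *: Qmat A0 A1 r) q.+2 k.+1); first last.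
- move=> r h1 h2; rewrite bin_small ?scale0r //.
  have : ((q.+2) * m <= r * m)%N by rewrite leq_mul2r h1 orbT.
  rewrite !mulSn; lia.
- lia.
apply: eq_bigr => r _; congr (_ *: _).
have hrm : ((r : nat) * m <= q * m + m)%N.
  by rewrite -mulSnr leq_mul2r -ltnS ltn_ord orbT.
have -> : (v%:Z - ((r : nat)%:Z - 1) * m%:Z) = (k - r * m)%N%:Z.
  rewrite -subzn; last lia.
  rewrite PoszM /v -subzn; last lia.
  by rewrite mulrBl mul1r opprB addrA subrK.
exact: binz_nat.
Qed.

Definition Xn (R : realType) d m (A0 A1 : 'M[R]_d) (G : nat -> 'M[R]_d) u :=
  \sum_(j < u) Y m A0 A1 (u - j.+1)%N *m G j.

Lemma Xsol_nat (R : realType) d m (A0 A1 : 'M[R]_d) G u : (0 < m)%N ->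
  Xsol m A0 A1 G u%:Z = Xn m A0 A1 G u.
Proof.
move=> hm; rewrite /Xsol /Xn; case: u => [|u]; first by rewrite big_ord0.
rewrite ltz_nat /= big_add1 /= big_mkord; apply: eq_bigr => j _.
rewrite -Zfun_Y //; congr (Zfun _ _ _ _ *m _).
rewrite -subzn; last by have := ltn_ord j; lia.
lia.
Qed.

Lemma Xsol_shift (R : realType) d m (A0 A1 : 'M[R]_d) G u : (0 < m)%N ->
  Xsol m A0 A1 G (u%:Z - m%:Z) = Xn m A0 A1 G (u - m)%N.
Proof.
move=> hm; case: (leqP m u) => h; first by rewrite subzn // Xsol_nat.
have -> : (u - m)%N = 0%N by lia.
rewrite /Xsol /Xn big_ord0; case: ifP => //; lia.
Qed.

Lemma LopM (R : realType) d (A0 A1 : 'M[R]_d) Y G :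
  A1 *m G = G *m A1 -> Lop A0 A1 (Y *m G) = Lop A0 A1 Y *m G.
Proof. by move=> h; rewrite /Lop mulmxDl !mulmxA -!mulmxA h. Qed.

Theorem theorem8 (R : realType) (d m : nat) (hd : (0 < d)%N) (hm : (0 < m)%N)
  (A0 A1 : 'M[R]_d) (G : nat -> 'M[R]_d)
  (hG : forall u : nat, A1 *m G u = G u *m A1) :
  (forall u : nat,
      Xsol m A0 A1 G (u%:Z + 1) - Xsol m A0 A1 G u%:Z
      = A0 *m Xsol m A0 A1 G (u%:Z - m%:Z)
        + Xsol m A0 A1 G (u%:Z - m%:Z) *m A1 + G u)
  /\ (forall u : int, - (m%:Z) <= u <= 0 -> Xsol m A0 A1 G u = 0).
Proof.
split; last first.
  by move=> u /andP[_ h]; rewrite /Xsol ltNge h.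
move=> u; have -> : u%:Z + 1 = (u.+1)%:Z by lia.
rewrite !Xsol_nat // Xsol_shift //.
rewrite -[A0 *m _ + _]/(Lop A0 A1 _).
rewrite /Xn big_ord_recr /= subnn.
have -> : Y m A0 A1 0 = 1%:M by rewrite /Y Yb_small.
rewrite mul1mx addrAC -sumrB; congr (_ + _).
transitivity (\sum_(j < u) (if (m <= u - j.+1)%N then Lop A0 A1 (Y m A0 A1 (u - j.+1 - m)) else 0) *m G j).
  apply: eq_bigr => j _.
  rewrite subSS -mulmxBl.
  have -> : (u - j = (u - j.+1).+1)%N by have := ltn_ord j; lia.
  by rewrite Y_rec.
rewrite /= /Lop mulmx_sumr mulmx_suml -big_split /=.
case: (leqP m u) => h.
  rewrite (@big_splitn _ (fun j : nat => (if (m <= u - j.+1)%N then Lop A0 A1 (Y m A0 A1 (u - j.+1 - m)) else 0) *m G j) (u - m)) ?leq_subr //.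
  rewrite [X in _ + X]big1 ?addr0; last first.
    move=> i _; case: ifP => [|_]; last by rewrite mul0mx.
    have := ltn_ord i; lia.
  apply: eq_bigr => j _; rewrite ifT; last by have := ltn_ord j; lia.
  by rewrite -LopM // subnAC.
rewrite big1; last first.
  move=> i _; case: ifP => [|_]; last by rewrite mul0mx.
  have := ltn_ord i; lia.
have -> : (u - m = 0)%N by lia.
by rewrite big_ord0.
Qed.
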